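(* Let $a,b>-1$, $n\ge1$, $\lambda$ a partition with $\ell(\lambda)\le n$, and $\sigma=(a+b+1)/2$. Then $$\frac{\mathfrak P_\lambda(x_1,\dots,x_n;a,b)}{\mathfrak P_\lambda(1,\dots,1;a,b)}=\sum_{\mu}\frac{I_\mu(\lambda;1;\sigma+n)\,s_\mu(x_1-1,\dots,x_n-1)}{c(n,\mu;a)},$$ the sum over partitions $\mu$ with $\ell(\mu)\le n$, where $s_\mu$ is the Schur polynomial and $$c(n,\mu;a)=2^{|\mu|}\prod_{i=1}^n\frac{\Gamma(\mu_i+n-i+1)\,\Gamma(\mu_i+n-i+a+1)}{\Gamma(n-i+1)\,\Gamma(n-i+a+1)}.$$ Equivalently, with $l_i=\lambda_i+n-i+\sigma$, the numerator $I_\mu(\lambda;1;\sigma+n)$ equals the factorial Schur polynomial $s_\mu(l_1^2,\dots,l_n^2\mid \sigma^2,(\sigma+1)^2,(\sigma+2)^2,\dots)$.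
   Context: $\mathfrak p_l(x;a,b)=\frac{\Gamma(l+a+1)}{\Gamma(l+1)\Gamma(a+1)}{}_2F_1(-l,l+a+b+1;a+1;\frac{1-x}2)$ are the classical Jacobi polynomials; $\mathfrak P_\lambda(x_1,\dots,x_n;a,b)=\det_{1\le i,j\le n}[\mathfrak p_{\lambda_i+n-i}(x_j;a,b)]/\prod_{i<j}(x_i-x_j)$ (a polynomial, so its value at $(1,\dots,1)$ makes sense). For a sequence $A=(A_1,A_2,\dots)$, $(y\mid A)^m=(y-A_1)\cdots(y-A_m)$, $(y\mid A)^0=1$, and the factorial Schur polynomial is $s_\mu(y_1,\dots,y_n\mid A)=\det_{1\le i,j\le n}[(y_i\mid A)^{\mu_j+n-j}]/\prod_{i<j}(y_i-y_j)$. For $\theta=1$ the interpolation $BC_n$ polynomial is $I_\mu(x_1,\dots,x_n;1;h)=s_\mu\big((x_1+h-1)^2,\dots,(x_n+h-n)^2\mid (h-n)^2,(h-n+1)^2,(h-n+2)^2,\dots\big)$, and $I_\mu(\lambda;1;h_0)$ denotes its value at $x=\lambda$, $h=h_0$. *)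

(* Defs.v *)
From HB Require Import structures.
From mathcomp Require Import all_boot all_order all_algebra.
From mathcomp Require Import mpoly.
From Stdlib Require Import ClassicalEpsilon.

Set Implicit Arguments.
Unset Strict Implicit.
Unset Printing Implicit Defensive.

Import Order.TTheory GRing.Theory Num.Theory.
Local Open Scope ring_scope.

Section Defs.
Variable R : realFieldType.

(* rising factorial (c)_k = c (c+1) ... (c+k-1) = Gamma(c+k)/Gamma(c) *)
Definition poch (c : R) (k : nat) : R := \prod_(i < k) (c + i%:R).

(* Classical Jacobi polynomial p_l(t;a,b), with
   Gamma(l+a+1)/(Gamma(l+1)Gamma(a+1)) = (a+1)_l / l!  and the terminating
   hypergeometric series 2F1(-l, l+a+b+1; a+1; (1-t)/2)
   (terms with k > l vanish since (-l)_k = 0), evaluated at t in {mpoly R[n]}. *)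
Definition jacobi n (a b : R) (l : nat) (t : {mpoly R[n]}) : {mpoly R[n]} :=
  (poch (a + 1) l / (l`!)%:R) *:
  \sum_(k < l.+1)
     ((poch (- l%:R) k * poch (l%:R + a + b + 1) k) / (poch (a + 1) k * (k`!)%:R))
       *: ((2%:R)^-1 *: (1 - t)) ^+ k.

Definition vdm n : {mpoly R[n]} :=
  \prod_(i < n) \prod_(j < n | (i < j)%N) ('X_i - 'X_j).

(* The (unique) polynomial Q with Q * vdm = D, i.e. "D / prod_{i<j}(x_i - x_j)"
   as a polynomial. *)
Definition div_vdm n (D : {mpoly R[n]}) : {mpoly R[n]} :=
  epsilon (inhabits 0) (fun Q => Q * vdm n = D).

(* Jacobi polynomial in n variables:
   P_lambda = det[p_{lambda_i+n-i}(x_j)] / prod_{i<j}(x_i-x_j)   (0-based i) *)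
Definition JacobiP n (a b : R) (lam : 'I_n -> nat) : {mpoly R[n]} :=
  div_vdm (\det (\matrix_(i < n, j < n) jacobi a b (lam i + (n - i.+1)) 'X_j)).

(* (y | A)^m = (y - A_1) ... (y - A_m); A is 0-indexed: A 0 = A_1. *)
Definition fpow n (y : {mpoly R[n]}) (A : nat -> R) (m : nat) : {mpoly R[n]} :=
  \prod_(k < m) (y - (A k)%:MP).

Definition fschur n (mu : 'I_n -> nat) (A : nat -> R) : {mpoly R[n]} :=
  div_vdm (\det (\matrix_(i < n, j < n) fpow 'X_i A (mu j + (n - j.+1)))).

Definition schur n (mu : 'I_n -> nat) : {mpoly R[n]} :=
  div_vdm (\det (\matrix_(i < n, j < n) 'X_i ^+ (mu j + (n - j.+1)))).

(* I_mu(x;1;h) evaluated at x = x0, h = h0: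
   s_mu((x_1+h-1)^2,...,(x_n+h-n)^2 | (h-n)^2,(h-n+1)^2,...) *)
Definition Ieval n (mu : 'I_n -> nat) (x0 : 'I_n -> R) (h0 : R) : R :=
  (fschur mu (fun k => (h0 - n%:R + k%:R) ^+ 2)).@[fun i => (x0 i + h0 - (i.+1)%:R) ^+ 2].

(* c(n,mu;a) = 2^|mu| prod_i Gamma(mu_i+n-i+1)Gamma(mu_i+n-i+a+1)
                              / (Gamma(n-i+1)Gamma(n-i+a+1)) *)
Definition cnorm n (mu : 'I_n -> nat) (a : R) : R :=
  2%:R ^+ (\sum_(i < n) mu i) *
  \prod_(i < n) (poch ((n - i.+1)%:R + 1) (mu i) * poch ((n - i.+1)%:R + a + 1) (mu i)).

End Defs.

(* a partition with at most n parts, as a weakly decreasing n-vector *)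
Definition is_partition n (mu : 'I_n -> nat) : bool :=
  [forall i : 'I_n, forall j : 'I_n, (i <= j)%N ==> (mu j <= mu i)%N].

Definition ffnat n N (m : {ffun 'I_n -> 'I_N}) : 'I_n -> nat := fun i => (m i : nat).

(* Main.v *)
Require Import Defs.
From HB Require Import structures.
From mathcomp Require Import all_boot all_order all_fingroup all_algebra.
From mathcomp Require Import mpoly zify ring lra.
From Stdlib Require Import ClassicalEpsilon.
Set Implicit Arguments. Unset Strict Implicit. Unset Printing Implicit Defensive.
Import Order.TTheory GRing.Theory Num.Theory.
Local Open Scope ring_scope.


Section Newton.
Variable A : comNzRingType.
Variable n : nat.
Variable x : 'I_n -> A.

Definition Np (m : nat) : {poly A} := \prod_(l < n | (l < m)%N) ('X - (x l)%:P).

Lemma Np0 : Np 0 = 1.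
Proof. by rewrite /Np big1 // => l; rewrite ltn0. Qed.

Lemma NpS k (hk : (k < n)%N) : Np k.+1 = Np k * ('X - (x (Ordinal hk))%:P).
Proof.
rewrite /Np (bigD1 (Ordinal hk)) //= mulrC; congr (_ * _).
by apply: eq_bigl => l; rewrite ltnS andbC -(inj_eq val_inj) /= -ltn_neqAle.
Qed.

Lemma newton_ex (p : {poly A}) k : (k <= n)%N -> exists (d : nat -> A) (r : {poly A}),
  p = \sum_(m < k) (d m)%:P * Np m + r * Np k.
Proof.
elim: k => [|k IH] hk.
  by exists (fun _ => 0), p; rewrite big_ord0 add0r Np0 mulr1.
have [d [r e]] := IH (ltnW hk).
have /factor_theorem [q eq] : root (r - (r.[x (Ordinal hk)])%:P) (x (Ordinal hk)).
  by rewrite /root hornerD hornerN hornerC subrr.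
set c := r.[x (Ordinal hk)] in eq *.
have er : r = q * ('X - (x (Ordinal hk))%:P) + c%:P by rewrite -eq subrK.
exists (fun m => if m == k then c else d m), q.
rewrite big_ord_recr /= eqxx NpS e er -addrA; congr (_ + _).
  apply: eq_bigr => m _; by rewrite ltn_eqF.
rewrite mulrDl addrC mulrA; congr (_ + _); rewrite -!mulrA; congr (_ * _).
by rewrite mulrC.
Qed.

Lemma Np_root m (i : 'I_n) : (i < m)%N -> (Np m).[x i] = 0.
Proof.
move=> im; rewrite /Np horner_prod (bigD1 i) //=.
by rewrite hornerD hornerN hornerX hornerC subrr mul0r.
Qed.

Lemma newton_eval (p : {poly A}) : exists d : 'I_n -> A,
  forall i : 'I_n, p.[x i] = \sum_(m < n) d m * (Np m).[x i].
Proof.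
have [d [r e]] := newton_ex p (leqnn n).
exists (fun m => d m) => i; rewrite e hornerD hornerM Np_root // mulr0 addr0.
rewrite horner_sum; apply: eq_bigr => m _; by rewrite hornerM hornerC.
Qed.

Definition vdmA := \prod_(i < n) \prod_(j < n | (i < j)%N) (x i - x j).

Lemma detNp : exists s : A, s * s = 1 /\
  \det (\matrix_(i < n, m < n) (Np m).[x i]) = s * vdmA.
Proof.
exists (\prod_(i < n) \prod_(j < n | (i < j)%N) (-1)); split.
  rewrite -big_split /=; apply: big1 => i _; rewrite -big_split /=.
  by apply: big1 => j _; rewrite mulrNN mulr1.
rewrite det_trig; last first.
  by apply/is_trig_mxP => i j ij; rewrite mxE Np_root.
rewrite (eq_bigr (fun i : 'I_n => \prod_(l < n | (l < i)%N) (x i - x l))); last first.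
  move=> i _; rewrite mxE /Np horner_prod; apply: eq_bigr => l _.
  by rewrite hornerD hornerN hornerX hornerC.
rewrite (exchange_big_dep predT) //= /vdmA -big_split /=; apply: eq_bigr => l _.
rewrite -big_split /=; apply: eq_bigr => i _.
by rewrite mulN1r opprB.
Qed.

Lemma vdm_div (F : 'I_n -> {poly A}) : exists Q : A,
  Q * vdmA = \det (\matrix_(i < n, j < n) (F j).[x i]).
Proof.
have /fin_all_exists [d hd] : forall j : 'I_n, exists d : 'I_n -> A,
   forall i : 'I_n, (F j).[x i] = \sum_(m < n) d m * (Np m).[x i].
  by move=> j; apply: newton_eval.
have [s [ss hs]] := detNp.
have -> : \matrix_(i < n, j < n) (F j).[x i] =
   (\matrix_(i < n, m < n) (Np m).[x i]) *m (\matrix_(m < n, j < n) d j m).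
  apply/matrixP => i j; rewrite !mxE hd; apply: eq_bigr => m _.
  by rewrite !mxE mulrC.
rewrite det_mulmx hs; exists (s * \det (\matrix_(m < n, j < n) d j m)).
by rewrite mulrAC.
Qed.

Lemma det_Vrev : \det (\matrix_(i < n, j < n) x i ^+ (n - j.+1)) = vdmA.
Proof.
pose rv : 'S_n := perm (@rev_ord_inj n).
pose V2 := Vandermonde n (\row_c x (rev_ord c)).
have e : (\matrix_(i < n, j < n) x i ^+ (n - j.+1))^T = row_perm rv (col_perm rv V2).
  by apply/matrixP => j i; rewrite !mxE !permE rev_ordK.
rewrite -det_tr e row_permE col_permE !det_mulmx !det_perm odd_permV.
rewrite mulrCA -signr_addb addbb expr0 mulr1.
rewrite det_Vandermonde /vdmA.
rewrite (pair_big_dep xpredT (fun i j : 'I_n => (i < j)%N)) /=.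
rewrite (pair_big_dep xpredT (fun i j : 'I_n => (i < j)%N)) /=.
rewrite (reindex_inj (h := fun p : 'I_n * 'I_n => (rev_ord p.2, rev_ord p.1))) /=; last first.
  by move=> [a1 a2] [b1 b2] /= /eqP; rewrite xpair_eqE => /andP[/eqP/rev_ord_inj -> /eqP/rev_ord_inj ->].
apply: eq_big => [[i j]|[i j] _] /=.
  case: i j => [i hi] [j hj] /=; apply/idP/idP => h; lia.
by rewrite !mxE !rev_ordK.
Qed.
End Newton.


Section Sorting.
Variables n K : nat.
Implicit Types (f g : {ffun 'I_n -> 'I_K}) (i j : 'I_n).

Definition decrb (g : {ffun 'I_n -> 'I_K}) : bool :=
  [forall i : 'I_n, forall j : 'I_n, (i < j)%N ==> (g j < g i)%N].

Definition geo : rel 'I_K := fun x y => (y <= x)%N.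
Lemma geo_total : total geo. Proof. by move=> x y; rewrite /geo leq_total. Qed.
Lemma geo_tr : transitive geo. Proof. by move=> y x z; rewrite /geo => h1 h2; exact: leq_trans h2 h1. Qed.
Lemma geo_asym : antisymmetric geo.
Proof. by move=> x y /andP[h1 h2]; apply: val_inj; apply/eqP; rewrite /geo in h1 h2; rewrite eqn_leq h1 h2. Qed.

Definition sl (f : {ffun 'I_n -> 'I_K}) := sort geo (map f (enum 'I_n)).
Definition sortf (f : {ffun 'I_n -> 'I_K}) : {ffun 'I_n -> 'I_K} :=
  [ffun j => nth (f j) (sl f) j].
Definition tfun (f : {ffun 'I_n -> 'I_K}) (i : 'I_n) : 'I_n :=
  insubd i (index (f i) (sl f)).
Definition tauf (f : {ffun 'I_n -> 'I_K}) : 'S_n :=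
  odflt 1%g [pick s : 'S_n | [forall i, s i == tfun f i]].

Lemma size_sl f : size (sl f) = n.
Proof. by rewrite size_sort size_map size_enum_ord. Qed.

Lemma mem_sl f i : f i \in sl f.
Proof. by rewrite mem_sort; apply: map_f; rewrite mem_enum. Qed.

Lemma uniq_sl f : injectiveb f -> uniq (sl f).
Proof. by move=> /injectiveP fi; rewrite sort_uniq map_inj_uniq ?enum_uniq. Qed.

Lemma sorted_sl f : sorted geo (sl f).
Proof. exact: (sort_sorted geo_total). Qed.

Lemma val_tfun f i : injectiveb f -> (tfun f i : nat) = index (f i) (sl f).
Proof.
move=> fi; rewrite /tfun val_insubd.
have -> : (index (f i) (sl f) < n)%N by rewrite -[X in (_ < X)%N](size_sl f) index_mem mem_sl.
by [].
Qed.

Lemma sortf_tfun f i : injectiveb f -> sortf f (tfun f i) = f i.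
Proof.
move=> fi; rewrite ffunE val_tfun // nth_index //; exact: mem_sl.
Qed.

Lemma tfun_inj f : injectiveb f -> injective (tfun f).
Proof.
move=> fi i j eq_ij; have := congr1 (sortf f) eq_ij.
by rewrite !sortf_tfun // => /(injectiveP _ fi).
Qed.

Lemma taufE f : injectiveb f -> forall i, tauf f i = tfun f i.
Proof.
move=> fi; rewrite /tauf; case: pickP => [s /forallP hs i|]; first exact/eqP.
by move=> /(_ (perm (tfun_inj fi))) /forallP; case=> i; rewrite permE.
Qed.

Lemma decr_sortf f : injectiveb f -> decrb (sortf f).
Proof.
move=> fi; apply/forallP=> i; apply/forallP=> j; apply/implyP=> lij.
rewrite !ffunE !(set_nth_default (f i) _ (_ : (_ < size (sl f))%N)) ?size_sl //.
have := sorted_ltn_nth geo_tr (f i) (sorted_sl f).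
move=> /(_ i j); rewrite !inE size_sl !ltn_ord => /(_ isT isT lij).
rewrite /geo leq_eqVlt => /orP[/eqP e|//].
have := nth_uniq (f i) (_ : (i < size (sl f))%N) (_ : (j < size (sl f))%N) (uniq_sl fi).
rewrite !size_sl !ltn_ord => /(_ isT isT) hu.
have : nth (f i) (sl f) i == nth (f i) (sl f) j by rewrite -(inj_eq val_inj) /= e.
by rewrite hu => /eqP ij; move: lij; rewrite ij ltnn.
Qed.

Lemma decr_inj g : decrb g -> injectiveb g.
Proof.
move=> /forallP dg; apply/injectiveP=> i j eq_ij.
apply/val_inj/eqP; case: (ltngtP i j) => // lij.
  by have := implyP (forallP (dg i) j) lij; rewrite eq_ij ltnn.
by have := implyP (forallP (dg j) i) lij; rewrite eq_ij ltnn.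
Qed.

Definition hcomp (p : {ffun 'I_n -> 'I_K} * 'S_n) : {ffun 'I_n -> 'I_K} :=
  [ffun i => p.1 (p.2 i)].

Lemma hcomp_inj p : decrb p.1 -> injectiveb (hcomp p).
Proof.
move=> /decr_inj /injectiveP gi; apply/injectiveP=> i j.
by rewrite !ffunE => /gi /perm_inj.
Qed.

Lemma sorted_decr g : decrb g -> sorted geo (map g (enum 'I_n)).
Proof.
move=> /forallP dg; rewrite sorted_map.
have : sorted (relpre val ltn) (enum 'I_n).
  by rewrite -sorted_map val_enum_ord iota_ltn_sorted.
apply: sub_sorted => i j /= lij; rewrite /geo.
exact: ltnW (implyP (forallP (dg i) j) lij).
Qed.

Lemma sl_hcomp g s : decrb g -> sl (hcomp (g, s)) = map g (enum 'I_n).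
Proof.
move=> dg; rewrite /sl -(sorted_sort geo_tr (sorted_decr dg)).
apply/(perm_sortP geo_total geo_tr geo_asym).
have -> : map (hcomp (g, s)) (enum 'I_n) = map g (map s (enum 'I_n)).
  by rewrite -[X in _ = X]map_comp; apply: eq_map => i; rewrite /= ffunE.
apply: perm_map; apply: uniq_perm; rewrite ?enum_uniq ?map_inj_uniq ?enum_uniq //.
  - by rewrite -enumT enum_uniq.
  - exact: perm_inj.
move=> i; rewrite [RHS]mem_enum; apply/mapP; exists (s^-1 i)%g; rewrite ?mem_enum ?permKV //.
Qed.

Lemma sortf_hcomp g s : decrb g -> sortf (hcomp (g, s)) = g.
Proof.
move=> dg; apply/ffunP=> j; rewrite ffunE sl_hcomp //.
by rewrite (nth_map j) ?size_enum_ord // nth_ord_enum.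
Qed.

Lemma tauf_hcomp g s : decrb g -> tauf (hcomp (g, s)) = s.
Proof.
move=> dg; have hi := hcomp_inj (p := (g, s)) dg.
apply/permP=> i; rewrite taufE //; apply/val_inj.
rewrite /= val_tfun // sl_hcomp // ffunE /=.
by rewrite index_map ?index_enum_ord //; apply/injectiveP/decr_inj.
Qed.

End Sorting.

Section CauchyBinet.
Variable R : comPzRingType.
Variables n K : nat.

Lemma det_mulmx_expand (W : 'M[R]_(n,K)) (C : 'M[R]_(K,n)) :
  \det (W *m C) = \sum_(f : {ffun 'I_n -> 'I_K})
      (\prod_i W i (f i)) * \det (rowsub f C).
Proof.
transitivity (\sum_(s : 'S_n) \sum_(f : {ffun 'I_n -> 'I_K})
   (-1) ^+ s * ((\prod_i W i (f i)) * \prod_i C (f i) (s i))).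
  apply: eq_bigr => s _; rewrite -big_distrr /=; congr (_ * _).
  rewrite (eq_bigr (fun i => \sum_k W i k * C k (s i))); last by move=> i _; rewrite mxE.
  rewrite bigA_distr_bigA; apply: eq_bigr => f _; by rewrite big_split.
rewrite exchange_big; apply: eq_bigr => f _ /=.
rewrite [\det (rowsub f C)]/(\det _) big_distrr; apply: eq_bigr => s _ /=.
rewrite mulrCA; congr (_ * (_ * _)); apply: eq_bigr => i _; by rewrite mxE.
Qed.

Lemma cauchy_binet (W : 'M[R]_(n,K)) (C : 'M[R]_(K,n)) :
  \det (W *m C) = \sum_(g : {ffun 'I_n -> 'I_K} | decrb g)
     \det (colsub g W) * \det (rowsub g C).
Proof.
rewrite det_mulmx_expand (bigID (fun f : {ffun 'I_n -> 'I_K} => injectiveb f)) /=.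
rewrite [X in _ + X]big1 ?addr0; last first.
  move=> f /injectivePn [i1 [i2 ne12 e12]].
  rewrite (determinant_alternate ne12) ?mulr0 // => j; by rewrite !mxE e12.
rewrite (reindex_onto (@hcomp n K) (fun f => (sortf f, tauf f))); last first.
  move=> f fi; apply/ffunP=> i; by rewrite ffunE /= taufE // sortf_tfun.
rewrite (eq_bigl (fun p => decrb p.1 && true)); last first.
  case=> g s /=; apply/idP/idP.
    case/andP=> hi /eqP [e _]; rewrite -e andbT; exact: decr_sortf.
  rewrite andbT => dg; by rewrite (hcomp_inj (p:=(g,s))) //= sortf_hcomp // tauf_hcomp // eqxx.
symmetry.
rewrite (eq_bigr (fun g => \sum_(s : 'S_n) (\prod_i W i (hcomp (g,s) i)) * \det (rowsub (hcomp (g,s)) C))); last first.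
  move=> g dg.
  rewrite [\det (colsub g W)]/(\det _) big_distrl; apply: eq_bigr => s _ /=.
  have -> : rowsub (hcomp (g, s)) C = row_perm s (rowsub g C).
    by apply/matrixP=> i j; rewrite !mxE ffunE.
  rewrite row_permE det_mulmx det_perm mulrCA mulrA; congr (_ * _).
  by congr (_ * _); apply: eq_bigr => i _; rewrite !mxE ffunE.
rewrite (pair_big_dep (fun g => decrb g) (fun _ _ => true)) /=.
by apply: eq_bigr; case.
Qed.
End CauchyBinet.


Section Part.
Variables n N : nat.

Lemma decr_gap K (g : {ffun 'I_n -> 'I_K}) : decrb g ->
  forall i j : 'I_n, (i <= j)%N -> (g j + (j - i) <= g i)%N.
Proof.
move=> /forallP dg.
suff H : forall d (i j : 'I_n), (j : nat) = (i + d)%N -> (g j + d <= g i)%N.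
  by move=> i j ij; apply: H; lia.
elim=> [|d IH] i j ej.
  rewrite addn0 in ej; have -> : j = i by exact: val_inj.
  by rewrite addn0.
have hj' : (i + d < n)%N by have := ltn_ord j; lia.
have := IH i (Ordinal hj') erefl.
have h3 : (Ordinal hj' < j)%N by rewrite /= ej; lia.
have := implyP (forallP (dg (Ordinal hj')) j) h3.
move=> h1 h2; lia.
Qed.

Lemma gm_lt (m : {ffun 'I_n -> 'I_N.+1}) (j : 'I_n) : (m j + (n - j.+1) < N + n)%N.
Proof. have := ltn_ord (m j); have := ltn_ord j; lia. Qed.

Definition gm (m : {ffun 'I_n -> 'I_N.+1}) : {ffun 'I_n -> 'I_(N + n)} :=
  [ffun j => Ordinal (gm_lt m j)].
Definition hm (g : {ffun 'I_n -> 'I_(N + n)}) : {ffun 'I_n -> 'I_N.+1} :=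
  [ffun j => inord (g j - (n - j.+1))].

Lemma gmE m j : (gm m j : nat) = (m j + (n - j.+1))%N.
Proof. by rewrite ffunE. Qed.

Lemma decr_gm m : decrb (gm m) = is_partition (fun i => m i : nat).
Proof.
apply/idP/idP.
  move=> dg; apply/forallP => i; apply/forallP => j; apply/implyP => ij.
  have := decr_gap dg ij; rewrite !gmE.
  have := ltn_ord i; have := ltn_ord j; lia.
move=> /forallP hp; apply/forallP => i; apply/forallP => j; apply/implyP => ij.
have := implyP (forallP (hp i) j) (ltnW ij); rewrite !gmE.
have := ltn_ord i; have := ltn_ord j; lia.
Qed.

Lemma hmK m : hm (gm m) = m.
Proof.
apply/ffunP => j; rewrite ffunE gmE addnK; apply: val_inj; rewrite /= inordK //.
Qed.

Lemma gmK g : decrb g -> gm (hm g) = g.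
Proof.
move=> dg; apply/ffunP => j; apply: val_inj => /=; rewrite gmE ffunE.
have hn : (0 < n)%N by have := ltn_ord j; lia.
have hn' : (n.-1 < n)%N by rewrite ltn_predL.
have lo := decr_gap dg (_ : (j <= Ordinal hn')%N).
have hi := decr_gap dg (_ : (Ordinal hn <= j)%N).
have h0 := ltn_ord (g (Ordinal hn)).
have hj := ltn_ord j.
have lo' := lo ltac:(rewrite /=; lia).
have hi' := hi ltac:(rewrite /=; lia).
rewrite /= in lo' hi'.
rewrite inordK; lia.
Qed.

Lemma reindex_part (V : nmodType) (F : {ffun 'I_n -> 'I_(N + n)} -> V) :
  \sum_(g | decrb g) F g =
  \sum_(m : {ffun 'I_n -> 'I_N.+1} | is_partition (ffnat m)) F (gm m).
Proof.
rewrite (reindex_onto gm hm) => [|g dg]; last exact: gmK.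
by apply: eq_bigl => m; rewrite hmK eqxx andbT decr_gm.
Qed.
End Part.


Section MP.
Variable R : realFieldType.
Variable n : nat.
Notation MP := {mpoly R[n]}.

Lemma vdm_neq0 : vdm R n != 0.
Proof.
rewrite /vdm; apply/prodf_neq0 => i _; apply/prodf_neq0 => j ij.
apply/negP => /eqP h.
have := congr1 (meval (fun k => if k == i then 1 else 0)) h.
rewrite mevalB !mevalXU eqxx meval0 (_ : (j == i) = false) ?subr0; last first.
  by apply/negbTE; rewrite neq_ltn ij orbT.
by move/eqP; rewrite oner_eq0.
Qed.

Lemma vdmE : vdm R n = vdmA (fun i : 'I_n => 'X_i).
Proof. by []. Qed.

Lemma div_vdmE (D Q : MP) : Q * vdm R n = D -> div_vdm D = Q.
Proof.
move=> hQ; rewrite /div_vdm.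
have := epsilon_spec (inhabits 0) (fun Q => Q * vdm R n = D) (ex_intro _ Q hQ).
by rewrite -hQ => /(mulIf vdm_neq0).
Qed.

Definition ev (p : {poly R}) (t : MP) : MP := (map_poly (@mpolyC n R) p).[t].

Lemma div_vdm_spec (M : 'M[MP]_n) (G : 'I_n -> {poly R}) :
  (forall i j, M i j = ev (G j) 'X_i) -> div_vdm (\det M) * vdm R n = \det M.
Proof.
move=> hM.
have [Q hQ] := vdm_div (fun i : 'I_n => 'X_i) (fun j => map_poly (@mpolyC n R) (G j)).
have eM : M = \matrix_(i, j) (map_poly (@mpolyC n R) (G j)).['X_i].
  by apply/matrixP => i j; rewrite mxE hM.
rewrite eM -hQ (div_vdmE (Q := Q)) //.
Qed.

Lemma ev_Xn k t : ev 'X^k t = t ^+ k.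
Proof. by rewrite /ev map_polyXn hornerXn. Qed.

Lemma ev_fpow (A : nat -> R) k t :
  ev (\prod_(l < k) ('X - (A l)%:P)) t = fpow t A k.
Proof.
rewrite /ev rmorph_prod horner_prod; apply: eq_bigr => l _.
by rewrite rmorphB /= map_polyX map_polyC hornerD hornerN hornerX hornerC.
Qed.

Lemma ev_shift K (c : nat -> R) t :
  ev (\sum_(k < K) c k *: ('X - 1) ^+ k) t = \sum_(k < K) c k *: (t - 1) ^+ k.
Proof.
rewrite /ev rmorph_sum horner_sum; apply: eq_bigr => k _.
rewrite /= map_polyZ hornerZ rmorphXn rmorphB /= map_polyX rmorph1 horner_exp.
by rewrite hornerD hornerN hornerX hornerC mul_mpolyC.
Qed.


Lemma det_triv (G : 'I_n -> {poly R}) :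
  (forall j : 'I_n, (size (G j) <= n - j)%N) -> (forall j : 'I_n, (G j)`_(n - j.+1) = 1) ->
  \det (\matrix_(i < n, j < n) ev (G j) 'X_i) = vdm R n.
Proof.
move=> hs hc.
have -> : \matrix_(i < n, j < n) ev (G j) 'X_i =
  (\matrix_(i < n, k < n) ('X_i : MP) ^+ (n - k.+1)) *m
  (\matrix_(k < n, j < n) ((G j)`_(n - k.+1))%:MP).
  apply/matrixP => i j; rewrite !mxE /ev (horner_coef_wide _ (_ : (_ <= n)%N)); last first.
    by rewrite size_map_poly (leq_trans (hs j)) // leq_subr.
  rewrite (reindex_inj (@rev_ord_inj n)) /=; apply: eq_bigr => k _.
  by rewrite !mxE coef_map /= mulrC.
rewrite det_mulmx det_Vrev det_trig; last first.
  apply/is_trig_mxP => k j kj; rewrite mxE nth_default ?mpolyC0 //.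
  apply: leq_trans (hs j) _; case: k j kj => [k hk] [j hj] /= kj; lia.
rewrite big1 ?mulr1 // => j _; by rewrite mxE hc.
Qed.


Definition Sx (k : 'I_n -> nat) : MP :=
  div_vdm (\det (\matrix_(i < n, j < n) ('X_i : MP) ^+ k j)).

Lemma Sx_spec k : Sx k * vdm R n = \det (\matrix_(i < n, j < n) ('X_i : MP) ^+ k j).
Proof. apply: (div_vdm_spec (G := fun j => 'X^(k j))) => i j; by rewrite mxE ev_Xn. Qed.

Lemma Sx_scale (k : 'I_n -> nat) :
  (\prod_(i < n) \prod_(j < n | (i < j)%N) (2%:R : R)) * (Sx k).@[fun _ => 0] =
  (Sx k).@[fun _ => 0] * \prod_(j < n) (2%:R : R) ^+ k j.
Proof.
pose lq := [tuple (2%:R : R) *: ('X_i : MP) | i < n].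
have hv : (comp_mpoly lq) (vdm R n) = (\prod_(i < n) \prod_(j < n | (i < j)%N) (2%:R : R))%:MP * vdm R n.
  rewrite /vdm rmorph_prod rmorph_prod -big_split /=; apply: eq_bigr => i _.
  rewrite rmorph_prod rmorph_prod -big_split /=; apply: eq_bigr => j _.
  by rewrite rmorphB /= !comp_mpolyXU -!tnth_nth !tnth_mktuple -scalerBr mul_mpolyC.
have hM : (comp_mpoly lq) (\det (\matrix_(i < n, j < n) ('X_i : MP) ^+ k j)) =
    \det (\matrix_(i < n, j < n) ('X_i : MP) ^+ k j) * (\prod_(j < n) (2%:R : R) ^+ k j)%:MP.
  rewrite -det_map_mx.
  have -> : map_mx (comp_mpoly lq) (\matrix_(i < n, j < n) ('X_i : MP) ^+ k j) =
     (\matrix_(i < n, j < n) ('X_i : MP) ^+ k j) *m diag_mx (\row_j ((2%:R : R) ^+ k j)%:MP).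
    apply/matrixP => i j; rewrite mul_mx_diag !mxE rmorphXn /= comp_mpolyXU -tnth_nth.
    by rewrite tnth_mktuple exprZn mulrC mul_mpolyC.
  rewrite det_mulmx det_diag rmorph_prod; congr (_ * _); apply: eq_bigr => j _; by rewrite mxE.
have := congr1 (comp_mpoly lq) (Sx_spec k); rewrite rmorphM /= hv hM -Sx_spec.
rewrite mulrCA mulrA [X in _ = X]mulrAC => /(mulIf (vdm_neq0)) /(congr1 (meval (fun _ => 0))).
rewrite !mevalM !mevalC comp_mpoly_meval.
rewrite (@meval_eq _ _ (fun i => (tnth lq i).@[fun _ => 0]) (fun _ => 0)) //.
by move=> i; rewrite tnth_mktuple mevalZ mevalXU mulr0.
Qed.


Lemma Sx_g0 : Sx (fun j => n - j.+1)%N = 1.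
Proof.
apply: div_vdmE; rewrite mul1r.
rewrite -(det_triv (G := fun j => 'X^(n - j.+1))).
- by congr (\det _); apply/matrixP => i j; rewrite !mxE ev_Xn.
- by move=> j; rewrite size_polyXn; case: j => j hj /=; lia.
- by move=> j; rewrite coefXn eqxx.
Qed.

Definition sh : n.-tuple MP := [tuple ('X_i - 1) | i < n].

Lemma vdm_sh : comp_mpoly sh (vdm R n) = vdm R n.
Proof.
rewrite /vdm rmorph_prod; apply: eq_bigr => i _.
rewrite rmorph_prod; apply: eq_bigr => j _.
rewrite rmorphB /= !comp_mpolyXU -!tnth_nth !tnth_mktuple.
by rewrite opprB addrA subrK.
Qed.

Lemma det_sh (k : 'I_n -> nat) :
  \det (\matrix_(i < n, j < n) (('X_i : MP) - 1) ^+ k j) = comp_mpoly sh (Sx k) * vdm R n.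
Proof.
rewrite -vdm_sh -rmorphM /= Sx_spec -det_map_mx; congr (\det _).
apply/matrixP => i j; rewrite !mxE rmorphXn /= comp_mpolyXU -tnth_nth tnth_mktuple //.
Qed.

Lemma sh_eval (p : MP) (x : 'I_n -> R) :
  (comp_mpoly sh p).@[x] = p.@[fun i => x i - 1].
Proof.
rewrite comp_mpoly_meval; apply: meval_eq => i.
by rewrite tnth_mktuple mevalB mevalXU meval1.
Qed.

Lemma fschur_eval (mu : 'I_n -> nat) (A : nat -> R) (v : 'I_n -> R) :
  (fschur mu A).@[v] * (vdm R n).@[v] =
  \det (\matrix_(i < n, j < n) \prod_(l < mu j + (n - j.+1)) (v i - A l)).
Proof.
rewrite -mevalM.
rewrite (div_vdm_spec (G := fun j => \prod_(l < mu j + (n - j.+1)) ('X - (A l)%:P))); last first.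
  by move=> i j; rewrite mxE ev_fpow.
rewrite -det_map_mx; congr (\det _); apply/matrixP => i j.
rewrite !mxE /fpow rmorph_prod; apply: eq_bigr => l _.
by rewrite /= mevalB mevalXU mevalC.
Qed.

Lemma size_fpowP (A : nat -> R) k :
  size (\prod_(l < k) ('X - (A l)%:P)) = k.+1 /\ \prod_(l < k) ('X - (A l)%:P) \is monic.
Proof.
elim: k => [|k [IH1 IH2]]; first by rewrite big_ord0 size_poly1 monic1.
rewrite big_ord_recr /= size_Mmonic ?monicXsubC ?size_XsubC ?IH1 ?addn2 //.
  by split => //; rewrite monicMr ?monicXsubC.
by rewrite monic_neq0.
Qed.

Lemma fschur0 (mu : 'I_n -> nat) (A : nat -> R) : (forall j, mu j = 0%N) ->
  fschur mu A = 1.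
Proof.
move=> h0; apply: div_vdmE; rewrite mul1r.
rewrite -(det_triv (G := fun j => \prod_(l < n - j.+1) ('X - (A l)%:P))).
- by congr (\det _); apply/matrixP => i j; rewrite !mxE h0 ev_fpow.
- move=> j; have [-> _] := size_fpowP A (n - j.+1); case: j => j hj /=; lia.
- move=> j; have [h1 h2] := size_fpowP A (n - j.+1).
  by move/monicP: h2; rewrite lead_coefE h1.
Qed.

End MP.


Section Scalar.
Variable R : realFieldType.
Variables a b : R.

Definition sig : R := (a + b + 1) / 2%:R.
Definition pm1 l := poch (a + 1) l / (l`!)%:R.
Definition cf (l k : nat) := (poch (- l%:R) k * poch (l%:R + a + b + 1) k) / (poch (a + 1) k * (k`!)%:R).
Definition cc l k := pm1 l * cf l k * (- 2%:R^-1) ^+ k.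
Definition fR (y : R) k := \prod_(j < k) (y - (sig + j%:R) ^+ 2).
Definition dd k := 2%:R ^+ k * (k`!)%:R * poch (a + 1) k.

Lemma poch_neg0 l k : (l < k)%N -> poch (- l%:R) k = 0 :> R.
Proof. by move=> lk; rewrite /poch (bigD1 (Ordinal lk)) //= addNr mul0r. Qed.

Lemma poch_gt0 (c : R) k : 0 < c -> 0 < poch c k.
Proof.
move=> hc; rewrite /poch; apply: prodr_gt0 => i _.
by apply: (lt_le_trans hc); rewrite lerDl ler0n.
Qed.

Lemma poch_add (c : R) p q : poch c (p + q) = poch c p * poch (c + p%:R) q.
Proof.
rewrite /poch big_split_ord /=; congr (_ * _); apply: eq_bigr => i _.
by rewrite natrD addrA.
Qed.

Lemma fact_split c m : ((m + c)`!)%:R = (c`!)%:R * poch (c%:R + 1) m :> R.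
Proof.
elim: m => [|m IH]; first by rewrite /poch big_ord0 mulr1.
rewrite addSn factS natrM IH /poch big_ord_recr /= -addn1 !natrD; ring.
Qed.

Lemma key l k : poch (- l%:R) k * poch (l%:R + a + b + 1) k * (-1) ^+ k =
   fR ((l%:R + sig) ^+ 2) k.
Proof.
elim: k => [|k IH]; first by rewrite /poch /fR !big_ord0 !mulr1.
move: IH; rewrite /poch /fR => IH; rewrite !big_ord_recr /= -IH exprS.
rewrite /sig; field; done.
Qed.


Lemma pa_neq0 k : -1 < a -> poch (a + 1) k != 0.
Proof. by move=> ha; rewrite gt_eqF // poch_gt0 // -(opprK 1) subr_gt0. Qed.

Lemma fact_neq0 k : (k`!)%:R != 0 :> R.
Proof. by rewrite pnatr_eq0 -lt0n fact_gt0. Qed.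

Lemma dd_neq0 k : -1 < a -> dd k != 0.
Proof.
move=> ha; rewrite /dd !mulf_neq0 ?pa_neq0 ?fact_neq0 ?expf_neq0 //.
by rewrite pnatr_eq0.
Qed.

Lemma pm1_neq0 l : -1 < a -> pm1 l != 0.
Proof. by move=> ha; rewrite /pm1 mulf_neq0 ?invr_eq0 ?pa_neq0 ?fact_neq0. Qed.

Lemma cc_eq l k : -1 < a -> cc l k = pm1 l * fR ((l%:R + sig) ^+ 2) k / dd k.
Proof.
move=> ha; rewrite -key /cc /cf /dd.
have -> : (- (2%:R : R)^-1) ^+ k = (-1) ^+ k / 2%:R ^+ k.
  by rewrite -exprVn -exprMn mulN1r.
have h1 := pa_neq0 k ha; have h2 := @fact_neq0 k.
have h3 : (2%:R : R) ^+ k != 0 by rewrite expf_neq0 // pnatr_eq0.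
by field; rewrite h1 h2 h3.
Qed.

Lemma dd_split c m : dd (m + c) =
  2%:R ^+ m * poch (c%:R + 1) m * poch (c%:R + a + 1) m * dd c.
Proof.
rewrite /dd exprD fact_split addnC poch_add.
have -> : a + 1 + c%:R = c%:R + a + 1 by ring.
ring.
Qed.


Lemma jac_exp n l K (t : {mpoly R[n]}) : (l < K)%N ->
  jacobi a b l t = \sum_(k < K) cc l k *: (t - 1) ^+ k.
Proof.
move=> lK; rewrite /jacobi scaler_sumr.
rewrite [RHS](bigID (fun k : 'I_K => (k < l.+1)%N)) /=.
rewrite [X in _ = _ + X]big1 ?addr0; last first.
  move=> k; rewrite -leqNgt => lk.
  by rewrite /cc /cf poch_neg0 // !mul0r mulr0 mul0r scale0r.
rewrite (big_ord_widen K (fun k : nat => (poch (a + 1) l / (l`!)%:R) *: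
   ((poch (- l%:R) k * poch (l%:R + a + b + 1) k) / (poch (a + 1) k * (k`!)%:R) *:
     ((2%:R)^-1 *: (1 - t)) ^+ k)) lK).
apply: eq_bigr => k _.
have -> : (1 - t) = (-1 : R) *: (t - 1) by rewrite scaleN1r opprB.
rewrite exprZn exprZn !scalerA /cc /cf /pm1; congr (_ *: _).
have -> : (- (2%:R : R)^-1) ^+ k = (-1) ^+ k * (2%:R^-1) ^+ k by rewrite -exprMn mulN1r.
ring.
Qed.

End Scalar.


Lemma det_scale (T : comPzRingType) m (u w : 'I_m -> T) (M : 'M[T]_m) :
  \det (\matrix_(i < m, j < m) (u i * M i j * w j)) = (\prod_i u i) * \det M * \prod_j w j.
Proof.
have -> : \matrix_(i < m, j < m) (u i * M i j * w j) =
   diag_mx (\row_i u i) *m M *m diag_mx (\row_j w j).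
  by apply/matrixP => i j; rewrite mul_mx_diag mul_diag_mx !mxE.
rewrite !det_mulmx !det_diag; congr (_ * _ * _); apply: eq_bigr => i _; by rewrite mxE.
Qed.

Lemma fschur_ext (R : realFieldType) (n : nat) (mu : 'I_n -> nat) (A1 A2 : nat -> R) :
  A1 =1 A2 -> fschur mu A1 = fschur mu A2.
Proof.
move=> e; rewrite /fschur; congr (div_vdm (\det _)); apply/matrixP => i j; rewrite !mxE.
by rewrite /fpow; apply: eq_bigr => k _; rewrite e.
Qed.

Section Main.
Variable R : realFieldType.
Variables (a b : R) (n : nat) (lam : 'I_n -> nat).
Hypotheses (ha : -1 < a) (hb : -1 < b) (hlam : is_partition lam).
Notation MP := {mpoly R[n]}.

Definition Lj (j : 'I_n) : R := (lam j)%:R + (n - j.+1)%:R + sig a b.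
Definition vpt (i : 'I_n) : R := Lj i ^+ 2.
Definition Asig (k : nat) : R := (sig a b + k%:R) ^+ 2.

Lemma Ieval_eq mu :
  Ieval mu (fun i => (lam i)%:R) ((a + b + 1) / 2%:R + n%:R) = (fschur mu Asig).@[vpt].
Proof.
rewrite /Ieval (@fschur_ext R n mu _ Asig); last first.
  by move=> k; rewrite /Asig /sig addrK.
apply: meval_eq => i; rewrite /vpt /Lj /sig natrB ?ltn_ord //; ring.
Qed.


Variable N : nat.
Hypothesis hN : forall j, (lam j <= N)%N.

Definition mlam (j : 'I_n) := (lam j + (n - j.+1))%N.
Lemma mlam_lt j : (mlam j < N + n)%N.
Proof. rewrite /mlam; have := hN j; have := ltn_ord j; lia. Qed.

Definition Wm : 'M[MP]_(n, N + n) := \matrix_(i < n, k < N + n) (('X_i : MP) - 1) ^+ k.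
Definition Cm : 'M[R]_(N + n, n) := \matrix_(k < N + n, j < n) cc a b (mlam j) k.

Lemma JacobiP_spec : JacobiP a b lam * vdm R n = \det (Wm *m map_mx (@mpolyC n R) Cm).
Proof.
have e1 : \det (\matrix_(i < n, j < n) jacobi a b (lam i + (n - i.+1)) ('X_j : MP)) =
    \det (Wm *m map_mx (@mpolyC n R) Cm).
  rewrite -det_tr; congr (\det _); apply/matrixP => i j; rewrite !mxE.
  rewrite (jac_exp _ _ _ (mlam_lt j)); apply: eq_bigr => k _.
  by rewrite !mxE mulrC mul_mpolyC.
rewrite /JacobiP e1.
apply: (div_vdm_spec (G := fun j => \sum_(k < N + n) cc a b (mlam j) k *: ('X - 1) ^+ k)).
move=> i j; rewrite ev_shift !mxE; apply: eq_bigr => k _.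
by rewrite !mxE mulrC mul_mpolyC.
Qed.

Lemma JacobiP_exp : JacobiP a b lam =
  \sum_(g : {ffun 'I_n -> 'I_(N + n)} | decrb g)
     (\det (rowsub g Cm))%:MP * comp_mpoly (sh R n) (Sx R (fun j => g j)).
Proof.
apply: (mulIf (@vdm_neq0 R n)); rewrite JacobiP_spec cauchy_binet big_distrl /=.
apply: eq_bigr => g _.
have -> : colsub g Wm = \matrix_(i < n, j < n) (('X_i : MP) - 1) ^+ g j.
  by apply/matrixP => i j; rewrite !mxE.
have -> : rowsub g (map_mx (@mpolyC n R) Cm) = map_mx (@mpolyC n R) (rowsub g Cm).
  by apply/matrixP => i j; rewrite !mxE.
by rewrite det_sh det_map_mx mulrC mulrA.
Qed.


Definition Dm (m : {ffun 'I_n -> 'I_N.+1}) : R := \det (rowsub (gm m) Cm).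

Lemma schur_Sx (m : {ffun 'I_n -> 'I_N.+1}) : Sx R (fun j => gm m j) = schur R (ffnat m).
Proof.
rewrite /Sx /schur; congr (div_vdm (\det _)); apply/matrixP => i j.
by rewrite !mxE gmE.
Qed.

Lemma JacobiP_eval (x : 'I_n -> R) : (JacobiP a b lam).@[x] =
  \sum_(m : {ffun 'I_n -> 'I_N.+1} | is_partition (ffnat m))
     Dm m * (schur R (ffnat m)).@[fun i => x i - 1].
Proof.
rewrite JacobiP_exp raddf_sum /= reindex_part; apply: eq_bigr => m _.
by rewrite mevalM mevalC sh_eval schur_Sx.
Qed.

Definition Pc : R := \prod_(j < n) pm1 a (mlam j).
Definition Vv : R := (vdm R n).@[vpt].

Lemma Dm_eq (m : {ffun 'I_n -> 'I_N.+1}) :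
  Dm m = (\prod_(j < n) (dd a (gm m j))^-1) *
     (Ieval (ffnat m) (fun i => (lam i)%:R) ((a + b + 1) / 2%:R + n%:R) * Vv) * Pc.
Proof.
rewrite /Dm.
have -> : rowsub (gm m) Cm = \matrix_(j < n, j' < n)
    ((dd a (gm m j))^-1 * fR a b (vpt j') (gm m j) * pm1 a (mlam j')).
  apply/matrixP => j j'; rewrite !mxE cc_eq // /vpt /Lj /mlam natrD.
  ring.
set M := \matrix_(j < n, j' < n) fR a b (vpt j') (gm m j).
rewrite (_ : \matrix_(j < n, j' < n) ((dd a (gm m j))^-1 * fR a b (vpt j') (gm m j) * pm1 a (mlam j'))
   = \matrix_(j < n, j' < n) ((dd a (gm m j))^-1 * M j j' * pm1 a (mlam j'))); last first.
  by apply/matrixP => j j'; rewrite !mxE.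
rewrite det_scale Ieval_eq -det_tr /Vv fschur_eval; congr (_ * \det _ * _).
apply/matrixP => i j; rewrite !mxE gmE /fR; apply: eq_bigr => l _.
by rewrite /Asig.
Qed.


Definition m0 : {ffun 'I_n -> 'I_N.+1} := [ffun => ord0].

Lemma m0_part : is_partition (ffnat m0).
Proof.
by apply/forallP => i; apply/forallP => j; rewrite /ffnat !ffunE leqnn implybT.
Qed.

Lemma schur_m0 : schur R (ffnat m0) = 1.
Proof.
rewrite -(Sx_g0 R n) /schur /Sx; congr (div_vdm (\det _)); apply/matrixP => i j.
by rewrite !mxE /ffnat ffunE.
Qed.

Lemma schur_at0 (m : {ffun 'I_n -> 'I_N.+1}) : m != m0 ->
  (schur R (ffnat m)).@[fun _ => 0] = 0.
Proof.
move=> hm.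
have h1 := @Sx_scale R n (fun j => (ffnat m j + (n - j.+1))%N).
have h2 := @Sx_scale R n (fun j => (n - j.+1)%N).
rewrite Sx_g0 meval1 mul1r mulr1 in h2.
change (Sx R (fun j => (ffnat m j + (n - j.+1))%N)) with (schur R (ffnat m)) in h1.
set s := (schur R (ffnat m)).@[fun _ => 0] in h1 *.
set E := \prod_(i < n) \prod_(j < n | (i < j)%N) (2%:R : R) in h1 h2.
have hE : E != 0 by rewrite h2; apply/prodf_neq0 => j _; rewrite expf_neq0 // pnatr_eq0.
rewrite (eq_bigr (fun j => 2%:R ^+ ffnat m j * 2%:R ^+ (n - j.+1))) in h1; last first.
  by move=> j _; rewrite exprD.
rewrite big_split /= -h2 prodrXr in h1.
have hpos : (0 < \sum_(j < n) ffnat m j)%N.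
  case: (pickP (fun j => ffnat m j != 0%N)) => [j hj|h0].
    by rewrite (bigD1 j) //= ltn_addr // lt0n.
  case/negP: hm; apply/eqP/ffunP => j; apply: val_inj; rewrite ffunE /=.
  by have := h0 j; rewrite /ffnat /= => /negbFE/eqP.
have h3 : (1 : R) < 2%:R ^+ (\sum_(j < n) ffnat m j).
  rewrite exprn_egt1; [by apply/eqP => h; move: hpos; rewrite h | lra].
have : E * (s * (1 - 2%:R ^+ (\sum_(j < n) ffnat m j))) = 0.
  by rewrite mulrBr mulr1 mulrBr h1; ring.
move/eqP; rewrite !mulf_eq0 (negbTE hE) /= subr_eq0 => /orP[/eqP //|/eqP e].
by move: h3; rewrite -e ltxx.
Qed.

Lemma JacobiP_1 : (JacobiP a b lam).@[fun _ => 1] = Dm m0.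
Proof.
rewrite JacobiP_eval (bigD1 m0 m0_part) /= big1 ?addr0.
  by rewrite (meval_eq _ (v2 := fun _ => 0)) ?schur_m0 ?meval1 ?mulr1 // => i; rewrite subrr.
move=> m /andP[_ hm]; rewrite (meval_eq _ (v2 := fun _ => 0)) ?schur_at0 ?mulr0 //.
by move=> i; rewrite subrr.
Qed.

Lemma Ieval_m0 : Ieval (ffnat m0) (fun i => (lam i)%:R) ((a + b + 1) / 2%:R + n%:R) = 1.
Proof. by rewrite Ieval_eq fschur0 ?meval1 // => j; rewrite /ffnat ffunE. Qed.


Lemma Vv_neq0 : Vv != 0.
Proof.
rewrite /Vv /vdm rmorph_prod; apply/prodf_neq0 => i _.
rewrite rmorph_prod; apply/prodf_neq0 => j ij.
rewrite /= mevalB !mevalXU /vpt subr_sqr mulf_neq0 //.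
  have hl : (lam j <= lam i)%N by have := implyP (forallP (forallP hlam i) j) (ltnW ij).
  have hc : ((n - j.+1).+1 <= n - i.+1)%N by have := ltn_ord j; lia.
  move: hl hc; rewrite -!(ler_nat R) => hl hc; rewrite -addn1 natrD in hc.
  rewrite /Lj; apply/eqP => h; lra.
have hc : 1 <= (n - i.+1)%:R :> R by rewrite ler1n; have := ltn_ord j; lia.
have h1 : 0 <= (lam i)%:R :> R by []. have h2 : 0 <= (lam j)%:R :> R by []. have h3 : 0 <= (n - j.+1)%:R :> R by [].
rewrite /Lj /sig; apply/eqP => h.
have hs : (a + b + 1) / 2%:R + (a + b + 1) / 2%:R = a + b + 1 by field.
set t := (a + b + 1) / 2%:R in h hs; clearbody t.
move: ha hb hc h1 h2 h3 h hs; generalize ((lam i)%:R : R) ((lam j)%:R : R) ((n - i.+1)%:R : R) ((n - j.+1)%:R : R) => x1 x2 x3 x4; lra.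
Qed.

Lemma Pc_neq0 : Pc != 0.
Proof. by apply/prodf_neq0 => j _; exact: pm1_neq0. Qed.

Lemma dd_prod (m : {ffun 'I_n -> 'I_N.+1}) :
  \prod_(j < n) dd a (gm m j) = cnorm (ffnat m) a * \prod_(j < n) dd a (n - j.+1).
Proof.
rewrite /cnorm -prodrXr -!big_split /=; apply: eq_bigr => j _.
by rewrite gmE dd_split /ffnat; ring.
Qed.

Lemma main_eq (x : 'I_n -> R) :
  (JacobiP a b lam).@[x] / (JacobiP a b lam).@[fun _ => 1] =
  \sum_(m : {ffun 'I_n -> 'I_N.+1} | is_partition (ffnat m))
     Ieval (ffnat m) (fun i => (lam i)%:R) ((a + b + 1) / 2%:R + n%:R)
     * (schur R (ffnat m)).@[fun i => x i - 1] / cnorm (ffnat m) a.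
Proof.
rewrite JacobiP_1 JacobiP_eval mulr_suml; apply: eq_bigr => m _.
rewrite (Dm_eq m) (Dm_eq m0) Ieval_m0 !prodfV dd_prod.
have e0 : \prod_(j < n) dd a (gm m0 j) = \prod_(j < n) dd a (n - j.+1).
  by apply: eq_bigr => j _; rewrite gmE /ffnat ffunE.
rewrite e0.
have h1 := Vv_neq0; have h2 := Pc_neq0.
have h3 : \prod_(j < n) dd a (n - j.+1) != 0 by apply/prodf_neq0 => j _; exact: dd_neq0.
have h4 : cnorm (ffnat m) a != 0.
  apply/eqP => hc.
  have h5 : \prod_(j < n) dd a (gm m j) != 0 by apply/prodf_neq0 => j _; exact: dd_neq0.
  by move: h5; rewrite dd_prod hc mul0r eqxx.
by field; rewrite h1 h2 h3 h4.
Qed.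

End Main.

Unset Implicit Arguments.
Set Strict Implicit.
Theorem proposition7p4 (R : realFieldType) (a b : R) (n : nat)
    (lam : 'I_n -> nat) :
  -1 < a -> -1 < b -> (1 <= n)%N -> is_partition lam ->
  (forall x : 'I_n -> R,
    exists N0 : nat, forall N : nat, (N0 <= N)%N ->
      (JacobiP a b lam).@[x] / (JacobiP a b lam).@[fun _ => 1] =
      \sum_(m : {ffun 'I_n -> 'I_N.+1} | is_partition (ffnat m))
         Ieval (ffnat m) (fun i => (lam i)%:R) ((a + b + 1) / 2%:R + n%:R)
         * (schur R (ffnat m)).@[fun i => x i - 1]
         / cnorm (ffnat m) a)
  /\
  (forall mu : 'I_n -> nat, is_partition mu ->
    Ieval mu (fun i => (lam i)%:R) ((a + b + 1) / 2%:R + n%:R) =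
    (fschur mu (fun k => ((a + b + 1) / 2%:R + k%:R) ^+ 2)).@[
       fun i => ((lam i)%:R + (n - i.+1)%:R + (a + b + 1) / 2%:R) ^+ 2]).
Proof.
move=> ha hb hn hlam; split.
  move=> x; exists (\max_(j < n) lam j) => N hN.
  apply: main_eq => // j; exact: leq_trans (leq_bigmax j) hN.
move=> mu _; exact: Ieval_eq.
Qed.
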